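(* Let $h:\mathcal{I}\to\mathcal{J}$ have a non-decreasing upper tail with threshold $c\in(\inf\mathcal{I},\sup\mathcal{I})$, let $h^{\star}=\sup_{x<c,\,x\in\mathcal{I}}h(x)$, and define $\tilde h:\mathcal{I}\to\mathcal{J}$ by $\tilde h(x)=h^{\star}$ if $x<c$, $\tilde h(c)=\max\{h(c),h^{\star}\}$, and $\tilde h(x)=h(x)$ if $x>c$. Then: (1) if $h$ is left-continuous, $\tilde h$ is left-continuous; (2) if $h$ is right-continuous, $\tilde h$ is right-continuous.
   Context: $\mathcal{I},\mathcal{J}\subseteq\mathbb{R}$ intervals; $h$ is real-valued whose discontinuities (if any) are jumps at which it is left- or right-continuous. A function $h:\mathcal{I}\to\mathcal{J}$ has a non-decreasing upper tail if there exists $x'\in\mathcal{I}$ such that (1) $h(x)\le h(x')$ for all $x\in\mathcal{I}$ with $x<x'$, and (2) $h(x_1)\le h(x_2)$ for all $x_1,x_2\in\mathcal{I}$ with $x'\le x_1\le x_2$. Its threshold $c$ is the infimum of the (assumed nonempty) set of all such $x'$. *)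

(* Defs.v *)
From Stdlib Require Import Reals.
Open Scope R_scope.

Definition is_interval (I : R -> Prop) : Prop :=
  forall x y z, I x -> I z -> x <= y -> y <= z -> I y.

Definition left_cont_at (I : R -> Prop) (h : R -> R) (x : R) : Prop :=
  forall eps, 0 < eps -> exists delta, 0 < delta /\
    forall y, I y -> x - delta < y -> y <= x -> Rabs (h y - h x) < eps.

Definition right_cont_at (I : R -> Prop) (h : R -> R) (x : R) : Prop :=
  forall eps, 0 < eps -> exists delta, 0 < delta /\
    forall y, I y -> x <= y -> y < x + delta -> Rabs (h y - h x) < eps.

Definition left_continuous (I : R -> Prop) (h : R -> R) : Prop :=
  forall x, I x -> left_cont_at I h x.

Definition right_continuous (I : R -> Prop) (h : R -> R) : Prop :=
  forall x, I x -> right_cont_at I h x.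

(* Existence of (finite) one-sided limits of h at x within I
   (vacuous when I has no points on that side of x). *)
Definition has_left_lim (I : R -> Prop) (h : R -> R) (x : R) : Prop :=
  exists L, forall eps, 0 < eps -> exists delta, 0 < delta /\
    forall y, I y -> x - delta < y -> y < x -> Rabs (h y - L) < eps.

Definition has_right_lim (I : R -> Prop) (h : R -> R) (x : R) : Prop :=
  exists L, forall eps, 0 < eps -> exists delta, 0 < delta /\
    forall y, I y -> x < y -> y < x + delta -> Rabs (h y - L) < eps.

(* Standing assumption: every discontinuity of h on I is a jump
   (both one-sided limits exist), at which h is left- or right-continuous.
   At continuity points this holds automatically. *)
Definition jump_regular (I : R -> Prop) (h : R -> R) : Prop :=
  forall x, I x ->
    has_left_lim I h x /\ has_right_lim I h x /\
    (left_cont_at I h x \/ right_cont_at I h x).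

Definition upper_tail_point (I : R -> Prop) (h : R -> R) (x' : R) : Prop :=
  I x' /\
  (forall x, I x -> x < x' -> h x <= h x') /\
  (forall x1 x2, I x1 -> I x2 -> x' <= x1 -> x1 <= x2 -> h x1 <= h x2).

Definition upper_tail_threshold (I : R -> Prop) (h : R -> R) (c : R) : Prop :=
  (exists x', upper_tail_point I h x') /\
  (forall x', upper_tail_point I h x' -> c <= x') /\
  (forall b, (forall x', upper_tail_point I h x' -> b <= x') -> b <= c).

Definition htilde (h : R -> R) (c hs : R) (x : R) : R :=
  if Rlt_dec x c then hs
  else if Rle_dec x c then Rmax (h c) hs
  else h x.

(* Main.v *)
Require Import Defs.
From Stdlib Require Import Reals Lra.
Open Scope R_scope.

Lemma ht_lt h c hs x : x < c -> htilde h c hs x = hs.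
Proof. intros H; unfold htilde; destruct (Rlt_dec x c); [reflexivity|lra]. Qed.

Lemma ht_eq h c hs : htilde h c hs c = Rmax (h c) hs.
Proof. unfold htilde; destruct (Rlt_dec c c); [lra|]; destruct (Rle_dec c c); [reflexivity|lra]. Qed.

Lemma ht_gt h c hs x : c < x -> htilde h c hs x = h x.
Proof. intros H; unfold htilde; destruct (Rlt_dec x c); [lra|]; destruct (Rle_dec x c); [lra|reflexivity]. Qed.

Theorem lemma3p5 (I J : R -> Prop) (h : R -> R) (c hs : R) :
  is_interval I -> is_interval J ->
  (forall x, I x -> J (h x)) ->
  jump_regular I h ->
  upper_tail_threshold I h c ->
  (exists a b, I a /\ I b /\ a < c /\ c < b) ->
  is_lub (fun y => exists x, I x /\ x < c /\ y = h x) hs ->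
  (left_continuous I h -> left_continuous I (htilde h c hs)) /\
  (right_continuous I h -> right_continuous I (htilde h c hs)).
Proof.
  intros HI _ _ _ [_ [Hlow Hinf]] [a [b [Ia [Ib [Hac Hcb]]]]] [Hub Hlub].
  assert (Ic : I c) by (apply (HI a c b); auto; lra).
  split.
  - intros LC x Ix eps Heps.
    destruct (Rlt_dec x c) as [Hxc|Hxc].
    + exists 1; split; [lra|]. intros y Iy H1 H2.
      rewrite !ht_lt by lra. rewrite Rminus_diag, Rabs_R0; lra.
    + destruct (Req_dec x c) as [E|E].
      * subst x.
        assert (Hc : h c <= hs).
        { destruct (Rle_dec (h c) hs) as [?|N]; [assumption|exfalso].
          destruct (LC c Ic (h c - hs)) as [d [Hd Hd2]]; [lra|].
          set (y := Rmax a (c - d/2)).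
          assert (Iy : I y) by (apply (HI a y c); auto; unfold y;
            [apply Rmax_l | apply Rmax_lub; lra]).
          assert (Hy1 : c - d < y) by (unfold y; pose proof (Rmax_r a (c-d/2)); lra).
          assert (Hy2 : y < c) by (unfold y; apply Rmax_lub_lt; lra).
          specialize (Hd2 y Iy Hy1 ltac:(lra)).
          assert (h y <= hs) by (apply Hub; exists y; auto).
          apply Rabs_def2 in Hd2. lra. }
        exists 1; split; [lra|]. intros y Iy H1 H2.
        rewrite ht_eq, Rmax_right by lra.
        destruct (Rlt_dec y c).
        -- rewrite ht_lt by lra. rewrite Rminus_diag, Rabs_R0; lra.
        -- assert (y = c) by lra. subst y. rewrite ht_eq, Rmax_right by lra.
           rewrite Rminus_diag, Rabs_R0; lra.
      * destruct (LC x Ix eps Heps) as [d [Hd Hd2]].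
        exists (Rmin d (x - c)); split; [apply Rmin_glb_lt; lra|].
        intros y Iy H1 H2.
        pose proof (Rmin_l d (x-c)); pose proof (Rmin_r d (x-c)).
        rewrite !ht_gt by lra. apply Hd2; auto; lra.
  - intros RC x Ix eps Heps.
    destruct (Rlt_dec x c) as [Hxc|Hxc].
    + exists (c - x); split; [lra|]. intros y Iy H1 H2.
      rewrite !ht_lt by lra. rewrite Rminus_diag, Rabs_R0; lra.
    + destruct (Req_dec x c) as [E|E].
      * subst x.
        assert (Hc : hs <= h c).
        { apply Hlub. intros v [x [Ix' [Hx ->]]].
          destruct (Rle_dec (h x) (h c)) as [?|N]; [assumption|exfalso].
          destruct (RC c Ic (h x - h c)) as [d [Hd Hd2]]; [lra|].
          assert (Hw : exists x', upper_tail_point I h x' /\ x' < c + d).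
          { destruct (Classical_Prop.classic (exists x', upper_tail_point I h x' /\ x' < c + d)) as [?|N2]; [assumption|].
            exfalso. assert (c + d <= c); [|lra].
            apply Hinf. intros x' Hx'. destruct (Rle_dec (c+d) x'); [assumption|].
            exfalso; apply N2; exists x'; split; auto; lra. }
          destruct Hw as [x' [Hup Hlt]]. assert (c <= x') by (apply Hlow; exact Hup). destruct Hup as [Ix'' [Hbel _]].
          specialize (Hbel x Ix' ltac:(lra)).
          specialize (Hd2 x' Ix'' ltac:(lra) Hlt).
          apply Rabs_def2 in Hd2. lra. }
        destruct (RC c Ic eps Heps) as [d [Hd Hd2]].
        exists d; split; [lra|]. intros y Iy H1 H2.
        rewrite ht_eq, Rmax_left by lra.
        destruct (Req_dec y c) as [->|Ny].
        -- rewrite ht_eq, Rmax_left by lra. rewrite Rminus_diag, Rabs_R0; lra.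
        -- rewrite ht_gt by lra. apply Hd2; auto.
      * destruct (RC x Ix eps Heps) as [d [Hd Hd2]].
        exists d; split; [lra|]. intros y Iy H1 H2.
        rewrite !ht_gt by lra. apply Hd2; auto.
Qed.
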